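(* Let $n$ be a positive integer. Define the graph $G=(V,E)$ with vertex set $V=\{\{i,j\}: i,j\in[n],\ i\neq j\}$ and edge set $E=\{(\{i,j\},\{j,k\}): i,j,k\in[n] \text{ pairwise distinct}\}$. Then there exists a subgraph $G'=(V,E')$ with $E'\subseteq E$ satisfying $|E'|\le n^2$ and $$\operatorname{dist}_{G'}(v_1,v_2)\le 4(\log_2(n)+1)\quad\text{for all } v_1,v_2\in V.$$
   Context: $\operatorname{dist}_{G'}$ denotes the shortest-path distance in $G'$. *)

(* Defs.v *)
From mathcomp Require Import all_boot.
From Stdlib Require Import Reals.
Set Implicit Arguments. Unset Strict Implicit. Unset Printing Implicit Defensive.

Definition is_vertex (n : nat) (A : {set 'I_n}) : bool := #|A| == 2.

Definition is_edge (n : nat) (e : {set {set 'I_n}}) : Prop :=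
  exists i j k : 'I_n, [/\ i != j, j != k, i != k &
    e = [set [set i; j]; [set j; k]]].

Definition adj (n : nat) (E' : {set {set {set 'I_n}}}) : rel {set 'I_n} :=
  fun u v => [set u; v] \in E'.

(* dist_{G'}(u,v) <= D : there is a walk in G' from u to v of length <= D
   (the shortest-path distance is the minimum of such lengths; +oo if none). *)
Definition dist_le (n : nat) (E' : {set {set {set 'I_n}}})
  (u v : {set 'I_n}) (D : R) : Prop :=
  exists s : seq {set 'I_n},
    path (adj E') u s /\ last u s = v /\ (INR (size s) <= D)%R.

Definition log2 (x : R) : R := (ln x / ln 2)%R.

(* Main.v *)
Require Import Defs.
From mathcomp Require Import all_boot.
From Stdlib Require Import Reals Lra.

Definition distn (n : nat) (E' : {set {set {set 'I_n}}}) (u v : {set 'I_n}) (k : nat) :=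
  exists s : seq {set 'I_n}, path (adj E') u s /\ last u s = v /\ (size s <= k)%N.
Arguments distn {n}.

Lemma distn_refl (n : nat) (E' : {set {set {set 'I_n}}}) (u : {set 'I_n}) : distn E' u u 0.
Proof. by exists [::]. Qed.

Lemma distn_edge (n : nat) (E' : {set {set {set 'I_n}}}) (u v : {set 'I_n}) : adj E' u v -> distn E' u v 1.
Proof. by move=> h; exists [:: v]; rewrite /= h. Qed.

Lemma distn_trans (n : nat) (E' : {set {set {set 'I_n}}}) (u v w : {set 'I_n}) k l :
  distn E' u v k -> distn E' v w l -> distn E' u w (k + l).
Proof.
move=> [s [ps [ls ss]]] [t [pt [lt st]]].
exists (s ++ t); rewrite cat_path last_cat ps ls pt lt size_cat; split => //.
split => //; exact: leq_add.
Qed.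

Lemma distn_refl1 (n : nat) (E' : {set {set {set 'I_n}}}) (u : {set 'I_n}) : distn E' u u 1.
Proof. by exists [::]. Qed.

Arguments distn_trans {n E' u v w k l}.

Lemma adj_sym (n : nat) (E' : {set {set {set 'I_n}}}) (u v : {set 'I_n}) : adj E' u v -> adj E' v u.
Proof. by rewrite /adj setUC. Qed.

Theorem lemma9 (n : nat) (hn : 0 < n) :
  exists E' : {set {set {set 'I_n}}},
    [/\ (forall e, e \in E' -> is_edge e),
        #|E'| <= n ^ 2 &
        forall v1 v2 : {set 'I_n}, is_vertex v1 -> is_vertex v2 ->
          dist_le E' v1 v2 (4 * (log2 (INR n) + 1))%R].
Proof.
pose h : 'I_n := Ordinal hn.
pose D := [set p : 'I_n * 'I_n | [&& p.1 != h, p.2 != h & p.1 != p.2]].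
pose g (p : 'I_n * 'I_n) : {set {set 'I_n}} :=
  if (p.1 < p.2)%N then [set [set h; p.1]; [set h; p.2]]
  else [set [set p.2; p.1]; [set h; p.1]].
exists (g @: D); split.
- move=> e /imsetP [[a b]]; rewrite inE /= => /and3P [ah bh ab] ->.
  rewrite /g /=; case: ifP => _.
  + exists a, h, b; split => //; first by rewrite eq_sym.
    by rewrite [[set a; h]]setUC.
  + exists b, a, h; split => //; first by rewrite eq_sym.
    by rewrite [[set a; h]]setUC.
- apply: leq_trans (leq_imset_card g D) _.
  have := max_card D; rewrite card_prod !card_ord => H.
  apply: leq_trans H _; rewrite /Nat.pow -/(muln n 1) muln1; exact: leqnn.
have hub : forall a b : 'I_n, a != h -> b != h ->
    distn (g @: D) [set h; a] [set h; b] 1.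
  move=> a b ah bh; case: (eqVneq a b) => [->|ab].
    by apply: distn_refl1.
  apply: distn_edge; rewrite /adj.
  case: (ltngtP a b) => [lab|lba|eab].
  - apply/imsetP; exists (a, b); first by rewrite inE /= ah bh ab.
    by rewrite /g /= lab.
  - apply/imsetP; exists (b, a); first by rewrite inE /= ah bh eq_sym ab.
    by rewrite /g /= lba setUC.
  - by move: ab; rewrite (val_inj eab) eqxx.
have spoke : forall v : {set 'I_n}, is_vertex v ->
    exists a : 'I_n, a != h /\ distn (g @: D) v [set h; a] 1 /\
                     distn (g @: D) [set h; a] v 1.
  move=> v; rewrite /is_vertex => /cards2P [x [y [xy ->]]].
  case: (eqVneq x h) => [exh|xh].
    subst x; exists y; split; first by rewrite eq_sym.
    by split; apply: distn_refl1.
  case: (eqVneq y h) => [eyh|yh].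
    subst y; exists x; rewrite setUC; split => //.
    by split; apply: distn_refl1.
  have key : forall a b : 'I_n, a != h -> b != h -> (b < a)%N ->
      adj (g @: D) [set b; a] [set h; a].
    move=> a b ah bh ba; apply/imsetP; exists (a, b).
      by rewrite inE /= ah bh eq_sym neq_ltn ba.
    by rewrite /g /= ltnNge ltnW.
  case: (ltngtP x y) => [lxy|lyx|exy].
  - exists y; split => //; split; apply: distn_edge; first exact: key.
    exact/adj_sym/key.
  - exists x; rewrite setUC; split => //; split; apply: distn_edge;
      first exact: key.
    exact/adj_sym/key.
  - by move: xy; rewrite (val_inj exy) eqxx.
move=> v1 v2 h1 h2.
have [a [ah [d1 _]]] := spoke v1 h1.
have [b [bh [_ d2]]] := spoke v2 h2.
have := distn_trans (distn_trans d1 (hub a b ah bh)) d2.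
move=> [s [ps [ls ss]]]; exists s; split => //; split => //.
have HS : (INR (size s) <= 3)%R.
  apply: (Rle_trans _ (INR 3)); first by apply: le_INR; exact/leP.
  simpl; lra.
have Hn : (1 <= INR n)%R.
  apply: (Rle_trans _ (INR 1)); first by simpl; lra.
  apply: le_INR; exact/leP.
have Hl : (0 <= log2 (INR n))%R.
  rewrite /log2; apply: Rmult_le_pos.
    case: (Rle_lt_or_eq_dec _ _ Hn) => [Hlt|Heq].
      rewrite -ln_1; apply: Rlt_le; apply: ln_increasing; lra.
    by rewrite -Heq ln_1; apply: Rle_refl.
  apply: Rlt_le; apply: Rinv_0_lt_compat; rewrite -ln_1; apply: ln_increasing; lra.
lra.
Qed.
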